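(* Let $n$ be even, $e_1,\dots,e_n$ the standard basis of $\mathbb{R}^n$ and $e_0=e_1+\dots+e_n$. Consider the complete flags $F_0=F(e_0,e_1,\dots,e_{n-1})$, $F_1=F(e_1,e_2,\dots,e_n)$ and $F_i=F(e_i,e_{i+1},\dots,e_n,e_0,\dots,e_{i-1})$ for $2\le i\le n$. If $b:(\mathcal{F}(\mathbb{R}^n))^n\to\mathbb{R}$ is any map satisfying $b(gF'_1,\dots,gF'_n)=\operatorname{sign}(\det g)\,b(F'_1,\dots,F'_n)$ for all $g\in\mathrm{GL}_n(\mathbb{Z})$ and all flags, then $db(F_0,\dots,F_n)=0$.
   Context: $\mathcal{F}(\mathbb{R}^n)$ is the set of complete flags in $\mathbb{R}^n$. For a basis $(w_1,\dots,w_n)$, $F(w_1,\dots,w_n)$ denotes the flag $\{0\}\subset\langle w_1\rangle\subset\langle w_1,w_2\rangle\subset\dots\subset\langle w_1,\dots,w_n\rangle=\mathbb{R}^n$. The coboundary is $db(F_0,\dots,F_n)=\sum_{i=0}^n(-1)^ib(F_0,\dots,\widehat{F_i},\dots,F_n)$. *)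

(* Defs.v *)
(* The real line R^n is modelled over an arbitrary
   realFieldType R (the statement is purely algebraic). *)
From HB Require Import structures.
From mathcomp Require Import all_boot all_order all_algebra.
Set Implicit Arguments. Unset Strict Implicit. Unset Printing Implicit Defensive.
Import Order.TTheory GRing.Theory Num.Theory.
Local Open Scope ring_scope.

Section Flags.
Variables (R : realFieldType) (n : nat).

Definition chain := {ffun 'I_n.+1 -> {vspace 'rV[R]_n}}.

Definition is_flag (c : chain) : bool :=
  [forall i : 'I_n.+1, \dim (c i) == i] &&
  [forall i : 'I_n, (c (inord i) <= c (inord i.+1))%VS].

Definition flag_of (s : seq 'rV[R]_n) : chain :=
  [ffun k : 'I_n.+1 => <<take k s>>%VS].

(* standard basis e_1..e_n (e_k = k-th unit vector, k >= 1), e_0 = e_1+...+e_n *)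
Definition ev (k : nat) : 'rV[R]_n :=
  \row_(j < n) (if k == 0%N then 1 else (k == j.+1)%:R).

Definition Fseq (i : nat) : seq 'rV[R]_n :=
  if i == 0%N then [seq ev k | k <- iota 0 n]
  else if i == 1%N then [seq ev k | k <- iota 1 n]
  else [seq ev k | k <- iota i (n.+1 - i) ++ iota 0 i].

Definition Fflag (i : 'I_n.+1) : chain := flag_of (Fseq i).

(* action of g in GL_n(Z) on R^n (v |-> g v, with v written as a row) *)
Definition act_vec (g : 'M[int]_n) (v : 'rV[R]_n) : 'rV[R]_n :=
  v *m (map_mx intr g)^T.

Definition act_chain (g : 'M[int]_n) (c : chain) : chain :=
  [ffun k => <<map (act_vec g) (vbasis (c k))>>%VS].

Definition cobound (b : {ffun 'I_n -> chain} -> R) (F : {ffun 'I_n.+1 -> chain}) : R :=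
  \sum_(i < n.+1) (-1) ^+ i * b [ffun j => F (lift i j)].

End Flags.

(* Main.v *)
Require Import Defs.
From HB Require Import structures.
From mathcomp Require Import all_boot all_order all_algebra.
Set Warnings "-notation-overridden,-ambiguous-paths,-deprecated".
Import Order.TTheory GRing.Theory Num.Theory.
Local Open Scope ring_scope.

Definition lf (R : realFieldType) n (g : 'M[int]_n) : 'End('rV[R]_n) :=
  linfun (mulmxr (map_mx intr g)^T).
Arguments lf R {n} g.

Lemma lfE (R : realFieldType) n (g : 'M[int]_n) (v : 'rV[R]_n) : lf R g v = act_vec g v.
Proof. by rewrite lfunE. Qed.

Lemma act_chainE (R : realFieldType) n (g : 'M[int]_n) (c : chain R n) k :
  act_chain g c k = (lf R g @: c k)%VS.
Proof.
rewrite ffunE -[X in (_ @: X)%VS](span_basis (vbasisP (c k))) limg_span; congr span.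
by apply: eq_map => v; rewrite lfE.
Qed.

Lemma lfM (R : realFieldType) n (g h : 'M[int]_n) : lf R (g *m h) = (lf R g \o lf R h)%VF.
Proof.
apply/lfunP => v; rewrite comp_lfunE !lfE /act_vec map_mxM trmx_mul mulmxA //.
Qed.

Lemma lf1 (R : realFieldType) n : lf R (1%:M : 'M[int]_n) = \1%VF.
Proof.
apply/lfunP => v; rewrite id_lfunE lfE /act_vec map_mx1 trmx1 mulmx1 //.
Qed.

Lemma span_scale (R : realFieldType) n (c : nat -> R) (f : nat -> 'rV[R]_n) (s : seq nat) :
  (forall m, c m != 0) ->
  <<[seq c m *: f m | m <- s]>>%VS = <<[seq f m | m <- s]>>%VS.
Proof.
move=> hc; apply/eqP; rewrite eqEsubv; apply/andP; split; apply/span_subvP => x /mapP [m hm ->].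
  by apply: memvZ; apply: memv_span; apply: map_f.
rewrite -[f m](scalerK (hc m)); apply: memvZ; apply: memv_span; apply/mapP; by exists m.
Qed.

Lemma dim_img_le (R : realFieldType) n (f : 'End('rV[R]_n)) (U : {vspace 'rV[R]_n}) :
  (\dim (f @: U) <= \dim U)%N.
Proof. by rewrite -(limg_ker_dim f U) leq_addl. Qed.

Lemma is_flag_act (R : realFieldType) n (g h : 'M[int]_n) (c : chain R n) :
  h *m g = 1%:M -> is_flag c -> is_flag (act_chain g c).
Proof.
move=> hg /andP [/forallP hd /forallP hs]; apply/andP; split.
  apply/forallP => i; rewrite act_chainE.
  suff -> : \dim (lf R g @: c i) = \dim (c i) by apply: hd.
  apply/eqP; rewrite eqn_leq dim_img_le /=.
  have E : c i = (lf R h @: (lf R g @: c i))%VS by rewrite -limg_comp -lfM hg lf1 lim1g.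
  by rewrite {1}E dim_img_le.
apply/forallP => i; rewrite !act_chainE; exact: limgS.
Qed.

Lemma sum_eq1 (T : nzRingType) n a (F : nat -> T) :
  \sum_(l < n) (((l : nat) == a)%:R * F l) = if (a < n)%N then F a else 0.
Proof.
case: (ltnP a n) => h.
  rewrite (bigD1 (Ordinal h)) //= eqxx mul1r big1 ?addr0 // => l hl.
  suff /negbTE -> : (l : nat) != a by rewrite mul0r.
  by apply: contra hl => /eqP e; apply/eqP/val_inj.
apply: big1 => l _; suff /negbTE -> : (l : nat) != a by rewrite mul0r.
by apply: contraTneq h => <-; rewrite -ltnNge.
Qed.

Lemma sum_eq1r (T : nzRingType) n a (F : nat -> T) :
  \sum_(l < n) (F l * ((l : nat) == a)%:R) = if (a < n)%N then F a else 0.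
Proof. by under eq_bigr => l _ do rewrite mulr_natr -mulr_natl; rewrite (sum_eq1 _ _ _ F). Qed.

Lemma sum_eq2 (T : nzRingType) n a (F : nat -> T) :
  \sum_(l < n) (((l : nat).+1 == a)%:R * F l) = if (0 < a <= n)%N then F a.-1 else 0.
Proof.
case: a => [|a] /=.
  by apply: big1 => l _; rewrite mul0r.
by under eq_bigr => l _ do rewrite eqSS; rewrite sum_eq1.
Qed.

Lemma act_entry (R : realFieldType) n (g : 'M[int]_n) (v : 'rV[R]_n) i :
  act_vec g v 0 i = \sum_j v 0 j * (g i j)%:~R.
Proof. by rewrite !mxE; apply: eq_bigr => j _; rewrite !mxE. Qed.

Lemma ev_entry (R : realFieldType) n m j :
  ev R n m 0 j = if m == 0%N then 1 else (m == j.+1)%:R.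
Proof. by rewrite mxE. Qed.

Definition sig n : 'M[int]_n := \matrix_(i, j) ((i == j.+1 :> nat)%:R - (j.+1 == n)%:R).
Definition tau n : 'M[int]_n := \matrix_(i, j) ((j == i.+1 :> nat)%:R - (j == 0 :> nat)%:R).
Definition dd n (i : nat) : int := if i.+1 == n then -1 else 1.
Definition g0 n : 'M[int]_n := \matrix_(i, j) ((i == j :> nat)%:R * dd n i).

Definition sucn n m := if m == n then 0%N else m.+1.
Definition sgm (R : realFieldType) (m : nat) : R := if (m <= 1)%N then -1 else 1.

Lemma intr_nat (R : realFieldType) (k : nat) : ((k%:R : int)%:~R : R) = k%:R.
Proof. by rewrite rmorph_nat. Qed.

Lemma sig_ev (R : realFieldType) n m : (0 < n)%N -> (m <= n)%N ->
  act_vec (sig n) (ev R n m) = sgm R (sucn n m) *: ev R n (sucn n m).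
Proof.
move=> hn hm; apply/rowP => i; rewrite act_entry !mxE /sucn.
case: m hm => [|m] hm /=.
  rewrite [0%N == n]eq_sym (negbTE (lt0n_neq0 hn)) /sgm /=.
  under eq_bigr => j _ do rewrite ev_entry /= mul1r !mxE rmorphB /= !intr_nat.
  rewrite sumrB.
  under eq_bigr => j _ do rewrite -[_%:R]mulr1 eq_sym.
  rewrite (sum_eq2 _ _ _ (fun=> 1)).
  under [X in _ - X]eq_bigr => j _ do rewrite -[_%:R]mulr1.
  rewrite (sum_eq2 _ _ _ (fun=> 1)) hn leqnn /= (ltnW (ltn_ord i)).
  case: (nat_of_ord i) => [|i'] /=; by rewrite ?subrr ?sub0r ?mulr0 ?mulr1.
under eq_bigr => j _ do rewrite ev_entry /= eqSS mxE rmorphB /= !intr_nat [(m == _)]eq_sym.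
rewrite (@sum_eq1 R _ _ (fun l => (((i : nat) == l.+1)%:R - (l.+1 == n)%:R))) /= (leq_trans (ltnSn m) hm).
case: (eqVneq m.+1 n) => [e|ne] /=.
  by rewrite e (ltn_eqF (ltn_ord i)) /sgm /= sub0r mulr1.
by rewrite /sgm /= subr0 mul1r eqSS eq_sym.
Qed.

Lemma tau_sig n : tau n *m sig n = 1%:M.
Proof.
apply/matrixP => i j; rewrite !mxE.
have hn : (0 < n)%N := leq_ltn_trans (leq0n _) (ltn_ord i).
under eq_bigr => l _ do rewrite !mxE mulrBl.
rewrite sumrB (@sum_eq1 int n i.+1 (fun l => ((l == j.+1)%:R - (j.+1 == n)%:R))).
rewrite (@sum_eq1 int n 0 (fun l => ((l == j.+1)%:R - (j.+1 == n)%:R))) hn /=.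
case: ltnP => h.
  by rewrite eqSS sub0r opprK subrK.
have e : i.+1 = n by apply/eqP; rewrite eqn_leq h ltn_ord.
by rewrite !sub0r opprK -[X in (_ == X)]e eqSS eq_sym.
Qed.

Lemma det_tau_sig n : \det (tau n) * \det (sig n) = 1.
Proof. by rewrite -det_mulmx tau_sig det1. Qed.

Lemma g0_diag n : g0 n = diag_mx (\row_(j < n) dd n j).
Proof. by apply/matrixP => i j; rewrite !mxE mulr_natl. Qed.

Lemma det_g0 n : (0 < n)%N -> \det (g0 n) = -1.
Proof.
move=> hn; rewrite g0_diag det_diag.
have hl : (n.-1 < n)%N by rewrite prednK.
rewrite (bigD1 (Ordinal hl)) //= big1 ?mulr1 ?mxE /dd ?prednK ?eqxx //.
move=> l hl'; rewrite mxE /dd; case: eqP => // e; case/eqP: hl'; apply: val_inj => /=.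
exact: (congr1 predn e).
Qed.

Lemma g0g0 n : g0 n *m g0 n = 1%:M.
Proof.
rewrite g0_diag mulmx_diag; apply/matrixP => i j; rewrite !mxE.
have -> : dd n i * dd n i = 1 by rewrite /dd; case: eqP; rewrite ?mulrNN mulr1.
by case: (i == j).
Qed.

Lemma g0_entry (R : realFieldType) n (v : 'rV[R]_n) i :
  act_vec (g0 n) v 0 i = v 0 i * (dd n i)%:~R.
Proof.
by rewrite /act_vec g0_diag map_diag_mx tr_diag_mx mul_mx_diag !mxE.
Qed.

Lemma g0_ev0 (R : realFieldType) n :
  act_vec (g0 n) (ev R n 0) = ev R n 0 - 2%:R *: ev R n n.
Proof.
apply/rowP => i; rewrite g0_entry !mxE /= mul1r /dd [n == _]eq_sym.
have hn : (0%N == n) = false by apply: ltn_eqF; exact: (leq_ltn_trans (leq0n i) (ltn_ord i)).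
rewrite hn; case: eqP => e /=.
  by rewrite rmorphN1 -[X in (X == _)]e eqxx mulr1 mulr2n opprD addrA subrr add0r.
by rewrite eq_sym; move/eqP/negbTE: e => ->; rewrite mulr0 subr0.
Qed.

Lemma g0_evm (R : realFieldType) n m : (0 < m)%N ->
  act_vec (g0 n) (ev R n m) = (if m == n then -1 else 1) *: ev R n m.
Proof.
move=> hm; apply/rowP => i; rewrite g0_entry !mxE /dd -(subnKC hm) /=.
case: eqP => e /=; last by rewrite mul0r mulr0.
by rewrite -e; case: ifP => _; rewrite ?rmorphN1 ?mulr1 ?mul1r.
Qed.

Lemma rotI n j : (j <= n.+1)%N -> rot j (iota 0 n.+1) = iota j (n.+1 - j) ++ iota 0 j.
Proof. by move=> hj; rewrite /rot drop_iota take_iota add0n (minn_idPl hj). Qed.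

Lemma FseqE (R : realFieldType) n j k : (j <= n)%N -> (k <= n)%N ->
  take k (Fseq R n j) = map (ev R n) (take k (rot j (iota 0 n.+1))).
Proof.
move=> hj hk; rewrite /Fseq.
have [->|h0] := eqVneq j 0%N.
  by rewrite rot0 -map_take !take_iota (minn_idPl hk) (minn_idPl (leqW hk)).
have [->|h1] := eqVneq j 1%N.
  rewrite rotI // -map_take take_cat size_iota subn1 /=.
  case: ltnP => h; first by [].
  have -> : k = n by apply/eqP; rewrite eqn_leq hk h.
  by rewrite subnn take0 cats0 take_iota minnn.
by rewrite rotI ?map_take // ltnW.
Qed.

Lemma map_sucnI n : map (sucn n) (iota 0 n.+1) = rot 1 (iota 0 n.+1).
Proof.
have -> : rot 1 (iota 0 n.+1) = rcons (iota 1 n) 0 by rewrite /= rot1_cons.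
rewrite -addn1 iotaD map_cat /= /sucn -[(0 + n)%N]/n eqxx -cats1; congr (_ ++ _).
have -> : [seq (if m == n then 0%N else m.+1) | m <- iota 0 n] = map succn (iota 0 n).
  by apply/eq_in_map => m; rewrite mem_iota add0n => /andP [_ h]; rewrite (ltn_eqF h).
by rewrite -[iota 1 n]/(iota (1 + 0) n) iotaDl.
Qed.

Lemma map_sucn n j : (j <= n)%N ->
  map (sucn n) (rot j (iota 0 n.+1)) = rot (sucn n j) (iota 0 n.+1).
Proof.
move=> hj; rewrite map_rot map_sucnI -rotD ?size_iota ?addn1 // /sucn.
case: eqP => [->|_]; last by [].
by rewrite -{1}(size_iota 0 n.+1) rot_size rot0.
Qed.

Definition Ffl (R : realFieldType) n j := flag_of (Fseq R n j).

Lemma act_chainM (R : realFieldType) n (g h : 'M[int]_n) (c : chain R n) :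
  act_chain (g *m h) c = act_chain g (act_chain h c).
Proof.
by apply/ffunP => k; rewrite !act_chainE lfM limg_comp.
Qed.

Lemma act_chain1 (R : realFieldType) n (c : chain R n) : act_chain 1%:M c = c.
Proof. by apply/ffunP => k; rewrite act_chainE lf1 lim1g. Qed.

Lemma mem_rotI n j k m : m \in take k (rot j (iota 0 n.+1)) -> (m <= n)%N.
Proof. by move/mem_take; rewrite mem_rot mem_iota add0n ltnS => /andP [_]. Qed.

Lemma sucn_le n j : (j <= n)%N -> (sucn n j <= n)%N.
Proof. by rewrite /sucn; case: eqP => // ne hj; rewrite ltn_neqAle hj andbT; apply/eqP. Qed.

Lemma sgm_neq0 (R : realFieldType) m : sgm R m != 0.
Proof. by rewrite /sgm; case: ifP; rewrite ?oppr_eq0 oner_eq0. Qed.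

Lemma sig_flag (R : realFieldType) n j : (0 < n)%N -> (j <= n)%N ->
  act_chain (sig n) (Ffl R n j) = Ffl R n (sucn n j).
Proof.
move=> hn hj; apply/ffunP => k; rewrite act_chainE !ffunE.
have hk : (k <= n)%N by rewrite -ltnS.
rewrite (@FseqE R n j k hj hk) (@FseqE R n _ k (@sucn_le n j hj) hk) limg_span -map_comp -map_sucn // -map_take.
rewrite -(@span_scale R n (sgm R) (ev R n)); last exact: sgm_neq0.
congr span; rewrite -map_comp.
apply/eq_in_map => m hm /=; rewrite lfE sig_ev //; exact: mem_rotI hm.
Qed.

Lemma take_rot_n n j k : (0 < j <= n)%N -> 0%N \in take k (rot j (iota 0 n.+1)) ->
  n \in take k (rot j (iota 0 n.+1)).
Proof.
move=> /andP [j0 jn]; rewrite rotI ?leqW // take_cat size_iota.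
case: ltnP => h.
  by move/mem_take; rewrite mem_iota => /andP [h1 _]; rewrite leqNgt j0 in h1.
move=> _; rewrite mem_cat; apply/orP; left; rewrite mem_iota jn /= subnKC //.
exact: leqW.
Qed.

Lemma g0_flag (R : realFieldType) n j : (0 < n)%N -> (0 < j <= n)%N ->
  act_chain (g0 n) (Ffl R n j) = Ffl R n j.
Proof.
move=> hn hj; apply/ffunP => k; rewrite act_chainE !ffunE.
have hk : (k <= n)%N by rewrite -ltnS.
set U := <<take k (Fseq R n j)>>%VS.
suff sub : (lf R (g0 n) @: U <= U)%VS.
  apply/eqP; rewrite eqEsubv sub /=.
  have E : U = (lf R (g0 n) @: (lf R (g0 n) @: U))%VS by rewrite -limg_comp -lfM g0g0 lf1 lim1g.
  by rewrite {1}E limgS.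
have hj' : (j <= n)%N by case/andP: hj.
rewrite /U (@FseqE R n j k hj' hk) limg_span; apply/span_subvP => x /mapP [v /mapP [m hm ->] ->].
rewrite lfE.
have memU : forall m', m' \in take k (rot j (iota 0 n.+1)) ->
    ev R n m' \in <<map (ev R n) (take k (rot j (iota 0 n.+1)))>>%VS.
  by move=> m' h; apply: memv_span; apply: map_f.
case: (posnP m) => [m0|mpos].
  rewrite m0 in hm *; rewrite g0_ev0; apply: memvB; first by apply: memU.
  by apply: rpredZ; apply: memU; apply: take_rot_n.
by rewrite g0_evm //; apply: memvZ; exact: memU.
Qed.

Lemma span_std (R : realFieldType) n : <<map (ev R n) (iota 1 n)>>%VS = fullv.
Proof.
apply/eqP; rewrite eqEsubv subvf /=; apply/subvP => v _.
have -> : v = \sum_(j < n) v 0 j *: ev R n j.+1.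
  apply/rowP => i; rewrite summxE (bigD1 i) //= big1 ?addr0.
    by rewrite !mxE /= eqxx mulr1.
  move=> j hj; rewrite !mxE /=; case: eqP => [e|]; last by rewrite mulr0.
  by case/eqP: hj; apply: val_inj; case: e.
apply: memv_suml => j _; apply: rpredZ; apply: memv_span; apply: map_f.
by rewrite mem_iota /= add1n ltnS ltn_ord.
Qed.

Lemma is_flag_of (R : realFieldType) n (s : seq 'rV[R]_n) :
  size s = n -> <<s>>%VS = fullv -> is_flag (flag_of s).
Proof.
move=> hs hf; apply/andP; split; apply/forallP => i; rewrite !ffunE.
  have hi : (i <= n)%N by rewrite -ltnS.
  rewrite eqn_leq; apply/andP; split.
    by apply: leq_trans (dim_span _) _; rewrite size_take_min geq_minl.
  have : (n <= \dim <<take i s>> + (n - i))%N.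
    have e : n = \dim (fullv : {vspace 'rV[R]_n}).
      by rewrite dimvf dim_matrix; symmetry; exact: mul1n.
    rewrite {1}e -hf; rewrite -{1}(cat_take_drop i s) span_cat.
    apply: leq_trans (dimv_add_leqif _ _).1 _.
    rewrite leq_add2l; apply: leq_trans (dim_span _) _; by rewrite size_drop hs.
  by move=> H; rewrite -(leq_add2r (n - i)) subnKC.
have hi : (i < n.+1)%N by apply: leqW.
rewrite !inordK ?ltnS //.
apply: sub_span => x; rewrite -(take_takel s (leqnSn i)); exact: mem_take.
Qed.

Lemma is_flag_F1 (R : realFieldType) n : is_flag (Ffl R n 1).
Proof. by apply: is_flag_of; rewrite /Fseq /= ?size_map ?size_iota // span_std. Qed.

Lemma is_flag_pos (R : realFieldType) n j : (0 < n)%N -> (0 < j <= n)%N -> is_flag (Ffl R n j).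
Proof.
move=> hn; elim: j => [//|j IH] /andP [_ hj].
case: (posnP j) => [->|jpos]; first exact: is_flag_F1.
have <- : sucn n j = j.+1 by rewrite /sucn (ltn_eqF hj).
rewrite -sig_flag ?(ltnW hj) //; apply: (@is_flag_act R n (sig n) (tau n) _ (tau_sig n)).
by apply: IH; rewrite jpos ltnW.
Qed.

Lemma is_flag_all (R : realFieldType) n j : (0 < n)%N -> (j <= n)%N -> is_flag (Ffl R n j).
Proof.
move=> hn hj; case: (posnP j) => [->|jpos]; last by apply: is_flag_pos => //; rewrite jpos.
have <- : sucn n n = 0%N by rewrite /sucn eqxx.
rewrite -sig_flag //; apply: (@is_flag_act R n (sig n) (tau n) _ (tau_sig n)).
by apply: is_flag_pos => //; rewrite hn leqnn.
Qed.

Lemma exists_g (R : realFieldType) n i : (0 < n)%N -> (i <= n)%N ->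
  exists g : 'M[int]_n, \det g = -1 /\
    forall j, (j <= n)%N -> j != i -> act_chain g (Ffl R n j) = Ffl R n j.
Proof.
move=> hn; elim: i => [_|i IH hi].
  exists (g0 n); split; first exact: det_g0.
  by move=> j hj j0; apply: g0_flag => //; rewrite lt0n j0 hj.
have [g [dg fg]] := IH (ltnW hi).
exists (sig n *m g *m tau n); split.
  by rewrite !det_mulmx dg mulrN1 mulNr mulrC det_tau_sig.
move=> j hj ji.
have ej : sucn n (if j == 0%N then n else j.-1) = j.
  rewrite /sucn; case: j hj {ji} => [|j] hj /=; first by rewrite eqxx.
  by rewrite (ltn_eqF hj).
have hj' : ((if j == 0%N then n else j.-1) <= n)%N.
  by case: eqP => // _; apply: leq_trans (leq_pred j) hj.
move: ej hj'; set j' := (if j == 0%N then n else j.-1) => ej hj'.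
have ji' : j' != i.
  apply: contraNneq ji => e; rewrite -ej e /sucn (ltn_eqF hi) //.
have tauF : act_chain (tau n) (Ffl R n j) = Ffl R n j'.
  by rewrite -ej -sig_flag // -act_chainM tau_sig act_chain1.
by rewrite !act_chainM tauF fg // sig_flag // ej.
Qed.

Theorem lemma5p1 (R : realFieldType) (n : nat) (hn : (0 < n)%N) (heven : ~~ odd n)
  (b : {ffun 'I_n -> chain R n} -> R) :
  (forall g : 'M[int]_n, g \in unitmx ->
     forall F' : {ffun 'I_n -> chain R n}, (forall k, is_flag (F' k)) ->
       b [ffun k => act_chain g (F' k)] = (Num.sg (\det g))%:~R * b F') ->
  cobound b [ffun i => Fflag R i] = 0.
Proof.
move=> H; rewrite /cobound; apply: big1 => i _.
set t := [ffun j => _].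
suff -> : b t = 0 by rewrite mulr0.
have hi : (i <= n)%N by rewrite -ltnS.
have [g [dg fg]] := @exists_g R n i hn hi.
have ug : g \in unitmx by rewrite unitmxE dg unitrN unitr1.
have ft : forall k, is_flag (t k).
  by move=> k; rewrite /t !ffunE; apply: is_flag_all => //; rewrite -ltnS.
have := H g ug t ft.
have -> : [ffun k => act_chain g (t k)] = t.
  apply/ffunP => k; rewrite /t !ffunE.
  change (act_chain g (Ffl R n (lift i k)) = Ffl R n (lift i k)).
  apply: fg; first by rewrite -ltnS.
  by rewrite eq_sym; exact: neq_lift.
rewrite dg sgrN1 rmorphN1 mulN1r => E.
have : b t *+ 2 == 0 by rewrite mulr2n {1}E addNr.
by rewrite mulrn_eq0 /= => /eqP.
Qed.
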